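(* Let $\gamma$ be a $G$-invariant K\''ahler metric on ${\rm M}_1$ of the form $\gamma=A\,d\boldsymbol{\lambda}\cdot d\boldsymbol{\lambda}+\left(\frac{A}{1+\lambda^2}+\frac{A'}{\lambda}\right)(\boldsymbol{\lambda}\cdot d\boldsymbol{\lambda})^2+\frac{1+2\lambda^2}{4}A\,\boldsymbol{\sigma}\cdot\boldsymbol{\sigma}+\frac{1+\lambda^2}{4\lambda}A'(\boldsymbol{\lambda}\cdot\boldsymbol{\sigma})^2+A\,\boldsymbol{\lambda}\cdot(\boldsymbol{\sigma}\times d\boldsymbol{\lambda})$ for a smooth function $A=A(\lambda)$, let $\Omega(X,Y)=\gamma(JX,Y)$ be its K\''ahler form, and let $H$ be a smooth $G$-invariant function on ${\rm M}_1$, written as a function $H(\lambda)$ of $\lambda$. Then the Hamiltonian vector field $X_H$, defined by $\Omega(Y,X_H)=dH(Y)$ for all vector fields $Y$, is $$X_H=\frac{2\sqrt{1+\lambda^2}\,H'(\lambda)}{(1+2\lambda^2)A(\lambda)+(\lambda+\lambda^3)A'(\lambda)}\,\widehat{\boldsymbol{\lambda}}\cdot\boldsymbol{\theta},$$ where $\widehat{\boldsymbol{\lambda}}=\boldsymbol{\lambda}/\lambda$ and $\widehat{\boldsymbol{\lambda}}\cdot\boldsymbol{\theta}=\sum_a\widehat\lambda_a\theta_a$.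
   Context: ${\rm M}_1$ is the space of degree one rational maps $W(z)=\frac{a_{11}z+a_{12}}{a_{21}z+a_{22}}$ of $S^2=\mathbb{C}\cup\{\infty\}$, identified with $PL(2,\mathbb{C})$, with complex structure $J$ induced by the open inclusion into $\mathbb{C}P^3$, $W\mapsto[a_{11}:a_{12}:a_{21}:a_{22}]$. With $\tau_a$ the Pauli matrices, every $[M]\in PL(2,\mathbb{C})$ decomposes uniquely as $[M]=[U](\Lambda\mathbb{I}_2+\boldsymbol{\lambda}\cdot\boldsymbol{\tau})$, $[U]\in PU(2)$, $\boldsymbol{\lambda}\in\mathbb{R}^3$, $\lambda=|\boldsymbol{\lambda}|$, $\Lambda=\sqrt{1+\lambda^2}$, giving ${\rm M}_1\cong PU(2)\times\mathbb{R}^3$. $\theta_a$ are the left-invariant vector fields on $PU(2)$ with value $\frac{i}{2}\tau_a$ at the identity and $\sigma_a$ the dual left-invariant 1-forms, both transported to ${\rm M}_1$ via this product structure (so $\{\partial/\partial\lambda_a,\theta_a\}$ is a frame dual to $\{d\lambda_a,\sigma_a\}$); $\cdot,\times$ are $\mathbb{R}^3$ scalar/vector products applied componentwise, juxtaposition means symmetrized tensor product. $G$ is the group generated by $[M]\mapsto[L][M][R]$ ($[L],[R]\in PU(2)$) and $P:W(z)\mapsto\overline{W(\bar z)}$. *)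

(* Defs.v *)
From Stdlib Require Import Reals.
From Coquelicot Require Import Coquelicot.
Open Scope R_scope.

Record R3 := mkR3 { c1 : R; c2 : R; c3 : R }.
Definition v0 : R3 := mkR3 0 0 0.
Definition vadd (a b : R3) : R3 := mkR3 (c1 a + c1 b) (c2 a + c2 b) (c3 a + c3 b).
Definition vscale (s : R) (a : R3) : R3 := mkR3 (s * c1 a) (s * c2 a) (s * c3 a).
Definition vdot (a b : R3) : R := c1 a * c1 b + c2 a * c2 b + c3 a * c3 b.
Definition vcross (a b : R3) : R3 :=
  mkR3 (c2 a * c3 b - c3 a * c2 b) (c3 a * c1 b - c1 a * c3 b) (c1 a * c2 b - c2 a * c1 b).
Definition vnorm (a : R3) : R := sqrt (vdot a a).

Record M2 := mkM2 { e11 : C; e12 : C; e21 : C; e22 : C }.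
Definition madd (a b : M2) : M2 :=
  mkM2 (e11 a + e11 b) (e12 a + e12 b) (e21 a + e21 b) (e22 a + e22 b).
Definition mmul (a b : M2) : M2 :=
  mkM2 (e11 a * e11 b + e12 a * e21 b) (e11 a * e12 b + e12 a * e22 b)
       (e21 a * e11 b + e22 a * e21 b) (e21 a * e12 b + e22 a * e22 b).
Definition mscale (s : C) (a : M2) : M2 :=
  mkM2 (s * e11 a) (s * e12 a) (s * e21 a) (s * e22 a).
Definition madj (a : M2) : M2 :=
  mkM2 (Cconj (e11 a)) (Cconj (e21 a)) (Cconj (e12 a)) (Cconj (e22 a)).
Definition mdet (a : M2) : C := e11 a * e22 a - e12 a * e21 a.
Definition mI : M2 := mkM2 1 0 0 1.

Definition tau1 : M2 := mkM2 0 1 1 0.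
Definition tau2 : M2 := mkM2 0 (- Ci) Ci 0.
Definition tau3 : M2 := mkM2 1 0 0 (-1).
Definition vtau (v : R3) : M2 :=
  madd (mscale (RtoC (c1 v)) tau1)
       (madd (mscale (RtoC (c2 v)) tau2) (mscale (RtoC (c3 v)) tau3)).

(* U is in SU(2) (a representative of [U] in PU(2) = SU(2)/{+-1}) *)
Definition SU2 (U : M2) : Prop := mmul U (madj U) = mI /\ mdet U = 1.

Definition Lam (l : R3) : R := sqrt (1 + vdot l l).
Definition Pmat (l : R3) : M2 := madd (mscale (RtoC (Lam l)) mI) (vtau l).

(* The map M_1 ~ PU(2) x R^3 -> C^{2x2} \ 0 (then -> CP^3):
   ([U], lambda) |-> U (Lambda I + lambda . tau), i.e. [a11:a12:a21:a22]. *)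
Definition Phi (U : M2) (l : R3) : M2 := mmul U (Pmat l).

Definition CDerive (f : R -> C) (t : R) : C :=
  (Derive (fun s => fst (f s)) t, Derive (fun s => snd (f s)) t).
Definition mderive (f : R -> M2) (t : R) : M2 :=
  mkM2 (CDerive (fun s => e11 (f s)) t) (CDerive (fun s => e12 (f s)) t)
       (CDerive (fun s => e21 (f s)) t) (CDerive (fun s => e22 (f s)) t).

(* A tangent vector at a point of M_1, in the frame {d/dlambda_a, theta_a}:
   tl v = (x_a) and tth v = (xi_a) stand for  sum_a x_a d/dlambda_a + sum_a xi_a theta_a. *)
Record TV := mkTV { tl : R3; tth : R3 }.
Definition tv0 : TV := mkTV v0 v0.

(* The left-invariant field theta_a has value (i/2) tau_a at the identity, hence
   value U (i/2) tau_a at U (matrix group); by the product rule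
   d Phi (x, xi) = U ((i/2) xi.tau) P(lambda) + U d/dt|_0 P(lambda + t x). *)
Definition dPhi (U : M2) (l : R3) (v : TV) : M2 :=
  madd (mmul U (mmul (mscale (Ci / 2) (vtau (tth v))) (Pmat l)))
       (mmul U (mderive (fun t => Pmat (vadd l (vscale t (tl v)))) 0)).

(* The complex structure J induced by the open inclusion in CP^3:
   T_[M] CP^3 = C^4 / C M and J is multiplication by i there.  So
   J v = w  iff  dPhi(w) = i dPhi(v) modulo C . Phi. *)
Definition IsJ (U : M2) (l : R3) (v w : TV) : Prop :=
  exists c : C, dPhi U l w = madd (mscale Ci (dPhi U l v)) (mscale c (Phi U l)).

(* Symmetrized products: (alpha beta)(X,Y) = (alpha(X) beta(Y) + alpha(Y) beta(X))/2. *)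
Definition gamma (A : R -> R) (l : R3) (X Y : TV) : R :=
  let lam := vnorm l in
  let a := A lam in
  let a' := Derive A lam in
  let x := tl X in let xi := tth X in
  let y := tl Y in let eta := tth Y in
  a * vdot x y
  + (a / (1 + lam ^ 2) + a' / lam) * (vdot l x * vdot l y)
  + (1 + 2 * lam ^ 2) / 4 * a * vdot xi eta
  + (1 + lam ^ 2) / (4 * lam) * a' * (vdot l xi * vdot l eta)
  + a * ((vdot l (vcross xi y) + vdot l (vcross eta x)) / 2).

(* dH(Y) for the G-invariant function H([U], lambda) = h(|lambda|):
   H does not depend on [U], so only the d/dlambda-components of Y contribute. *)
Definition dH (h : R -> R) (l : R3) (Y : TV) : R :=
  Derive (fun t => h (vnorm (vadd l (vscale t (tl Y))))) 0.

(* X is the Hamiltonian vector field of H at ([U], lambda):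
   Omega(Y, X) = gamma(J Y, X) = dH(Y) for all tangent vectors Y. *)
Definition IsHamiltonianVF (A h : R -> R) (U : M2) (l : R3) (X : TV) : Prop :=
  forall Y JY : TV, IsJ U l Y JY -> gamma A l JY X = dH h l Y.

Definition XH_formula (A h : R -> R) (l : R3) : TV :=
  let lam := vnorm l in
  let coef := 2 * sqrt (1 + lam ^ 2) * Derive h lam /
              ((1 + 2 * lam ^ 2) * A lam + (lam + lam ^ 3) * Derive A lam) in
  mkTV v0 (vscale coef (vscale (/ lam) l)).

(* Main.v *)
From Stdlib Require Import Reals Lra Psatz Nsatz Classical.
From Coquelicot Require Import Coquelicot.
Open Scope R_scope.
Require Import Defs.
Lemma Lam_der (l x : R3) : is_derive (fun t => Lam (vadd l (vscale t x))) 0 (vdot l x / Lam l).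
Proof. destruct l as [l1 l2 l3], x as [x1 x2 x3]. unfold Lam, vadd, vscale, vdot; simpl.
auto_derive.
- nra.
- rewrite !Rmult_0_l, !Rplus_0_r. 
  assert (0 < sqrt (1 + (l1 * l1 + l2 * l2 + l3 * l3))) by (apply sqrt_lt_R0; nra).
  field. lra.
Qed.

Lemma lin_der (a b : R) : is_derive (fun t => a + t * b) 0 b.
Proof. auto_derive; auto; ring. Qed.

Lemma Pmat_der (l x : R3) : mderive (fun t => Pmat (vadd l (vscale t x))) 0 =
  mkM2 (RtoC (vdot l x / Lam l + c3 x)) (c1 x, - c2 x) (c1 x, c2 x) (RtoC (vdot l x / Lam l - c3 x)).
Proof.
  unfold mderive, CDerive. simpl. unfold RtoC.
  f_equal; f_equal.
  all: apply is_derive_unique; destruct l as [l1 l2 l3], x as [x1 x2 x3];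
    unfold Lam, vadd, vscale, vdot; simpl; auto_derive;
    [ nra | rewrite ?Rmult_0_l, ?Rplus_0_r;
      assert (0 < sqrt (1 + (l1 * l1 + l2 * l2 + l3 * l3))) by (apply sqrt_lt_R0; nra);
      field; lra ].
Qed.

Definition Dm (l : R3) (v : TV) : M2 :=
  madd (mmul (mscale (Ci / 2) (vtau (tth v))) (Pmat l))
   (mkM2 (RtoC (vdot l (tl v) / Lam l + c3 (tl v))) (c1 (tl v), - c2 (tl v)) (c1 (tl v), c2 (tl v)) (RtoC (vdot l (tl v) / Lam l - c3 (tl v)))).

Definition Jinv (l : R3) (Z : TV) : TV :=
  let L := Lam l in
  let z := tl Z in let ze := tth Z in
  let u := vadd (vscale (/2) ze) (vscale (-1) (vcross z l)) in
  let y := vscale (/L) (vadd u (vscale (vdot l u) l)) in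
  mkTV y (vscale 2 (vadd (vcross y l) (vadd (vscale (-L) z) (vscale (vdot l z / L) l)))).

Lemma M2_ext a b : e11 a = e11 b -> e12 a = e12 b -> e21 a = e21 b -> e22 a = e22 b -> a = b.
Proof. destruct a, b; simpl; intros; subst; reflexivity. Qed.

Lemma Ci2 : (Ci / 2)%C = (0, /2).
Proof. apply injective_projections; simpl; field. Qed.

Lemma Lam_sq l : Lam l * Lam l = 1 + vdot l l /\ 0 < Lam l.
Proof. unfold Lam. destruct l as [l1 l2 l3]; unfold vdot; simpl. split.
 rewrite sqrt_sqrt; nra. apply sqrt_lt_R0; nra. Qed.


Definition wvec (l : R3) (v : TV) : C * C * C :=
  let L := Lam l in let x := tl v in let xi := tth v in
  let s := vdot l x / L in
  let cr := vcross x l in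
  ((L * c1 x - s * c1 l, c1 xi / 2 - c1 cr), (L * c2 x - s * c2 l, c2 xi / 2 - c2 cr),
   (L * c3 x - s * c3 l, c3 xi / 2 - c3 cr)).

Definition Wm (l : R3) (v : TV) : M2 :=
  let '(w1, w2, w3) := wvec l v in
  mkM2 w3 (w1 - Ci * w2)%C (w1 + Ci * w2)%C (- w3)%C.


Lemma D_W l v : Dm l v = mmul (Wm l v) (Pmat l).
Proof.
  destruct (Lam_sq l) as [HL HL0].
  unfold Dm, Wm, wvec, Pmat. rewrite Ci2.
  destruct v as [[z1 z2 z3] [w1 w2 w3]]. destruct l as [l1 l2 l3].
  revert HL HL0. generalize (Lam (mkR3 l1 l2 l3)). intros L HL HL0.
  unfold madd, mmul, mscale, vtau, mI, tau1, tau2, tau3, vadd, vscale, vdot, vcross in *; simpl in *.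
  unfold RtoC.
  f_equal; apply injective_projections; simpl.
  all: unfold Rdiv; set (Li := / L); assert (HLi : L * Li = 1) by (unfold Li; field; lra); clearbody Li.
  all: clear HL0. all: nsatz.
Qed.

Lemma Jinv_tl l Z : tl (Jinv l Z) = vscale (/ Lam l)
   (vadd (vadd (vscale (/2) (tth Z)) (vscale (-1) (vcross (tl Z) l)))
      (vscale (vdot l (vadd (vscale (/2) (tth Z)) (vscale (-1) (vcross (tl Z) l)))) l)).
Proof. reflexivity. Qed.
Lemma Jinv_tth l Z : tth (Jinv l Z) = vscale 2 (vadd (vcross (tl (Jinv l Z)) l)
   (vadd (vscale (- Lam l) (tl Z)) (vscale (vdot l (tl Z) / Lam l) l))).
Proof. reflexivity. Qed.

Lemma W_J l Z : Wm l Z = mscale Ci (Wm l (Jinv l Z)).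
Proof.
  pose proof (Jinv_tl l Z) as Hy. pose proof (Jinv_tth l Z) as He.
  revert Hy He. generalize (Jinv l Z). intros [[y1 y2 y3] [e1 e2 e3]] Hy He. simpl in Hy, He.
  destruct (Lam_sq l) as [HL HL0].
  unfold Wm, wvec.
  destruct Z as [[z1 z2 z3] [w1 w2 w3]]. destruct l as [l1 l2 l3].
  revert HL HL0 Hy He. generalize (Lam (mkR3 l1 l2 l3)). intros L HL HL0 Hy He.
  unfold mscale, vadd, vscale, vdot, vcross in *; simpl in *.
  injection He; clear He; intros He3 He2 He1. subst e1 e2 e3.
  injection Hy; clear Hy; intros Hy3 Hy2 Hy1. subst y1 y2 y3.
  unfold Rdiv in *; set (Li := / L) in *; assert (HLi : L * Li = 1) by (unfold Li; field; lra); clearbody Li.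
  assert (HLi2 : Li * Li * (1 + (l1 * l1 + l2 * l2 + l3 * l3)) = 1) by (rewrite <- HL; transitivity ((L * Li) * (L * Li)); [ring | rewrite HLi; ring]).
  set (h2 := / 2) in *; assert (H2 : 2 * h2 = 1) by (unfold h2; field); clearbody h2.
  set (u1 := h2 * w1 + -1 * (z2 * l3 - z3 * l2)) in *.
  set (u2 := h2 * w2 + -1 * (z3 * l1 - z1 * l3)) in *.
  set (u3 := h2 * w3 + -1 * (z1 * l2 - z2 * l1)) in *.
  assert (Hw1 : w1 = 2 * (u1 + (z2 * l3 - z3 * l2))) by (unfold u1; transitivity ((2 * h2) * w1); [rewrite H2; ring | ring]).
  assert (Hw2 : w2 = 2 * (u2 + (z3 * l1 - z1 * l3))) by (unfold u2; transitivity ((2 * h2) * w2); [rewrite H2; ring | ring]).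
  assert (Hw3 : w3 = 2 * (u3 + (z1 * l2 - z2 * l1))) by (unfold u3; transitivity ((2 * h2) * w3); [rewrite H2; ring | ring]).
  clearbody u1 u2 u3. subst w1 w2 w3.
  f_equal; apply injective_projections; simpl.
  all: clear HL0 HL.
  all: nsatz.
Qed.

Lemma J_exists l Z : Dm l Z = madd (mscale Ci (Dm l (Jinv l Z))) (mscale 0 (Pmat l)).
Proof.
  rewrite !D_W, W_J. generalize (Wm l (Jinv l Z)) (Pmat l). intros M P.
  apply M2_ext; simpl; ring.
Qed.

Lemma J_trace l Y Z c : Dm l Z = madd (mscale Ci (Dm l Y)) (mscale c (Pmat l)) ->
  vdot l (tth Z) * Lam l = 2 * vdot l (tl Y).
Proof.
  intro H.
  pose (tr := fun M => (e11 M + e22 M)%C).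
  pose (trl := fun M => (RtoC (c3 l) * (e11 M - e22 M) + e12 M * (c1 l, c2 l) + e21 M * (c1 l, (- c2 l)%R))%C).
  assert (H1 := f_equal (fun M => snd (tr M)) H).
  assert (H2 := f_equal (fun M => snd (trl M)) H).
  clear H. unfold tr, trl in *.
  destruct (Lam_sq l) as [HL HL0].
  unfold Dm, Pmat in *. rewrite Ci2 in *.
  destruct Z as [[z1 z2 z3] [w1 w2 w3]], Y as [[y1 y2 y3] [v1 v2 v3]], c as [cr ci]. destruct l as [l1 l2 l3].
  revert HL HL0 H1 H2. generalize (Lam (mkR3 l1 l2 l3)). intros L HL HL0 H1 H2.
  unfold madd, mmul, mscale, vtau, mI, tau1, tau2, tau3, vadd, vscale, vdot, vcross in *; simpl in *.
  unfold Rdiv in *; set (Li := / L) in *; assert (HLi : L * Li = 1) by (unfold Li; field; lra); clearbody Li.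
  set (h2 := / 2) in *; assert (Hh2 : 2 * h2 = 1) by (unfold h2; field); clearbody h2.
  clear HL0. nsatz.
Qed.

Lemma mmul_madd_r U A B : mmul U (madd A B) = madd (mmul U A) (mmul U B).
Proof. apply M2_ext; simpl; ring. Qed.
Lemma mmul_mscale_r U c A : mmul U (mscale c A) = mscale c (mmul U A).
Proof. apply M2_ext; simpl; ring. Qed.
Definition madjg (U : M2) : M2 := mkM2 (e22 U) (- e12 U) (- e21 U) (e11 U).
Lemma adj_cancel U M : mdet U = 1%C -> mmul (madjg U) (mmul U M) = M.
Proof. unfold mdet; intro H. apply M2_ext; simpl.
 - transitivity ((e11 U * e22 U - e12 U * e21 U) * e11 M)%C; [ring | rewrite H; ring].
 - transitivity ((e11 U * e22 U - e12 U * e21 U) * e12 M)%C; [ring | rewrite H; ring].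
 - transitivity ((e11 U * e22 U - e12 U * e21 U) * e21 M)%C; [ring | rewrite H; ring].
 - transitivity ((e11 U * e22 U - e12 U * e21 U) * e22 M)%C; [ring | rewrite H; ring].
Qed.

Definition tvsub (X W : TV) : TV := mkTV (vadd (tl X) (vscale (-1) (tl W))) (vadd (tth X) (vscale (-1) (tth W))).

Lemma gamma_sub A l Z X W : gamma A l Z (tvsub X W) = gamma A l Z X - gamma A l Z W.
Proof.
  unfold gamma. destruct Z as [[z1 z2 z3] [w1 w2 w3]], X as [[x1 x2 x3] [y1 y2 y3]], W as [[p1 p2 p3] [q1 q2 q3]].
  unfold tvsub, vadd, vscale, vdot, vcross; simpl. set (m := vnorm l). set (a := A m). set (b := Derive A m). unfold Rdiv; ring.
Qed.

Lemma tvsub_0 X W : tvsub X W = tv0 -> X = W.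
Proof.
  destruct X as [[x1 x2 x3] [y1 y2 y3]], W as [[p1 p2 p3] [q1 q2 q3]].
  unfold tvsub, tv0, v0, vadd, vscale; simpl. intro H; injection H; intros.
  f_equal; f_equal; lra.
Qed.

Lemma vdot_self_pos l : l <> v0 -> 0 < vdot l l.
Proof. destruct l as [l1 l2 l3]; unfold vdot, v0; simpl; intro H.
  destruct (Req_dec l1 0), (Req_dec l2 0), (Req_dec l3 0); subst; try nra.
  exfalso; apply H; reflexivity. Qed.

Lemma vnorm_sq l : l <> v0 -> vnorm l * vnorm l = vdot l l /\ 0 < vnorm l.
Proof. intro H; pose proof (vdot_self_pos l H). unfold vnorm; split.
  rewrite sqrt_sqrt; lra. apply sqrt_lt_R0; lra. Qed.

Lemma gamma_XF A l Z k : l <> v0 ->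
  gamma A l Z (mkTV v0 (vscale k l)) =
  k * vdot l (tth Z) * ((1 + 2 * vnorm l ^ 2) * A (vnorm l) + (vnorm l + vnorm l ^ 3) * Derive A (vnorm l)) / 4.
Proof.
  intro Hl. destruct (vnorm_sq l Hl) as [Hm Hm0].
  unfold gamma. simpl.
  assert (E : vdot l (vscale k l) = k * (vnorm l * vnorm l)).
  { rewrite Hm. destruct l; unfold vdot, vscale; simpl; ring. }
  rewrite E. revert Hm0. generalize (vnorm l) as m. intros m Hm0.
  destruct Z as [[z1 z2 z3] [w1 w2 w3]], l as [l1 l2 l3].
  unfold v0, vdot, vscale, vcross; simpl. field. nra.
Qed.

Lemma dH_eq h l Y : l <> v0 -> (forall (n : nat) (r : R), 0 < r -> ex_derive_n h n r) ->
  dH h l Y = Derive h (vnorm l) * (vdot l (tl Y) / vnorm l).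
Proof.
  intros Hl Hh. destruct (vnorm_sq l Hl) as [Hm Hm0].
  unfold dH. apply is_derive_unique.
  assert (Hd : is_derive (fun t => vnorm (vadd l (vscale t (tl Y)))) 0 (vdot l (tl Y) / vnorm l)).
  { pose proof (vdot_self_pos l Hl) as Hp.
    destruct l as [l1 l2 l3], Y as [[y1 y2 y3] ?]. unfold vnorm, vadd, vscale, vdot in *; simpl in *.
    auto_derive.
    - rewrite !Rmult_0_l, !Rplus_0_r; lra.
    - rewrite !Rmult_0_l, !Rplus_0_r. field. lra. }
  assert (Hh1 : ex_derive h (vnorm l)) by exact (Hh 1%nat _ Hm0).
  replace (vadd l (vscale 0 (tl Y))) with l in Hd by (destruct l, Y as [[] ?]; unfold vadd, vscale; simpl; f_equal; ring).
  assert (Hh2 : is_derive h (vnorm (vadd l (vscale 0 (tl Y)))) (Derive h (vnorm l))).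
  { replace (vadd l (vscale 0 (tl Y))) with l by (destruct l, Y as [[] ?]; unfold vadd, vscale; simpl; f_equal; ring).
    apply Derive_correct; exact Hh1. }
  pose proof (is_derive_comp h (fun t => vnorm (vadd l (vscale t (tl Y)))) 0 _ _ Hh2 Hd) as Hc.
  unfold scal in Hc; simpl in Hc; unfold mult in Hc; simpl in Hc.
  rewrite Rmult_comm. exact Hc.
Qed.

Lemma dPhi_eq U l v : dPhi U l v = mmul U (Dm l v).
Proof. unfold dPhi, Dm. rewrite Pmat_der, mmul_madd_r. reflexivity. Qed.

Lemma IsJ_cancel U l Y Z : SU2 U -> IsJ U l Y Z ->
  exists c, Dm l Z = madd (mscale Ci (Dm l Y)) (mscale c (Pmat l)).
Proof.
  intros [_ Hdet] [c Hc]. exists c.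
  rewrite !dPhi_eq in Hc. unfold Phi in Hc.
  rewrite <- !mmul_mscale_r, <- mmul_madd_r in Hc.
  apply (f_equal (mmul (madjg U))) in Hc. rewrite !adj_cancel in Hc by exact Hdet.
  exact Hc.
Qed.

Lemma IsJ_Jinv U l Z : IsJ U l (Jinv l Z) Z.
Proof.
  exists 0%R. rewrite !dPhi_eq. unfold Phi.
  rewrite <- !mmul_mscale_r, <- mmul_madd_r, <- J_exists. reflexivity.
Qed.

Lemma D_pos A l : l <> v0 ->
  (forall l : R3, l <> v0 -> forall X : TV, X <> tv0 -> 0 < gamma A l X X) ->
  0 < (1 + 2 * vnorm l ^ 2) * A (vnorm l) + (vnorm l + vnorm l ^ 3) * Derive A (vnorm l).
Proof.
  intros Hl Hmetric.
  assert (Hne : mkTV v0 (vscale 1 l) <> tv0).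
  { intro E. assert (E2 : vscale 1 l = v0) by (change (tth (mkTV v0 (vscale 1 l)) = tth tv0); rewrite E; reflexivity).
    apply Hl. destruct l as [a b c]; unfold vscale, v0 in *; simpl in *.
    injection E2; intros Ec Eb Ea. f_equal; lra. }
  pose proof (Hmetric l Hl _ Hne) as Hg.
  rewrite gamma_XF in Hg by exact Hl. cbn [tth] in Hg.
  assert (E : vdot l (vscale 1 l) = vdot l l) by (destruct l; unfold vdot, vscale; simpl; ring).
  rewrite E in Hg. pose proof (vdot_self_pos l Hl) as HS.
  revert Hg. generalize ((1 + 2 * vnorm l ^ 2) * A (vnorm l) + (vnorm l + vnorm l ^ 3) * Derive A (vnorm l)).
  revert HS. generalize (vdot l l). intros S HS D Hg.
  assert (Hg' : 0 < S * D) by (replace (S * D) with (4 * (1 * S * D / 4)) by field; lra).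
  destruct (Rle_lt_dec D 0) as [Hle|Hlt]; [|exact Hlt].
  exfalso. assert (S * D <= 0) by nra. lra.
Qed.

Lemma XF_ham A h U l :
  (forall (n : nat) (r : R), 0 < r -> ex_derive_n h n r) ->
  (forall l : R3, l <> v0 -> forall X : TV, X <> tv0 -> 0 < gamma A l X X) ->
  SU2 U -> l <> v0 -> IsHamiltonianVF A h U l (XH_formula A h l).
Proof.
  intros Hh Hmetric HU Hl Y JY HJ.
  destruct (IsJ_cancel U l Y JY HU HJ) as [c Hc].
  apply J_trace in Hc.
  pose proof (D_pos A l Hl Hmetric) as HD.
  destruct (vnorm_sq l Hl) as [Hm Hm0].
  destruct (Lam_sq l) as [HL HL0].
  rewrite dH_eq by assumption.
  unfold XH_formula.
  set (m := vnorm l) in *.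
  set (s := 2 * sqrt (1 + m ^ 2) * Derive h m / ((1 + 2 * m ^ 2) * A m + (m + m ^ 3) * Derive A m)).
  assert (E : vscale s (vscale (/ m) l) = vscale (s / m) l).
  { destruct l; unfold vscale; simpl; f_equal; unfold Rdiv; ring. }
  rewrite E, gamma_XF by exact Hl. fold m.
  assert (Es : sqrt (1 + m ^ 2) = Lam l).
  { unfold Lam. f_equal. rewrite <- Hm. ring. }
  unfold s. rewrite Es.
  revert HD. generalize ((1 + 2 * m ^ 2) * A m + (m + m ^ 3) * Derive A m). intros D HD.
  revert Hc HL0. generalize (Lam l). intros L Hc HL0.
  replace (vdot l (tl Y)) with (vdot l (tth JY) * L / 2) by lra.
  field. lra.
Qed.

Theorem proposition5p1 (A h : R -> R)
  (HA : forall (n : nat) (r : R), 0 < r -> ex_derive_n A n r)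
  (Hh : forall (n : nat) (r : R), 0 < r -> ex_derive_n h n r)
  (Hmetric : forall l : R3, l <> v0 -> forall X : TV, X <> tv0 -> 0 < gamma A l X X)
  (U : M2) (l : R3) (HU : SU2 U) (Hl : l <> v0) (X : TV) :
  IsHamiltonianVF A h U l X <-> X = XH_formula A h l.
Proof.
  split.
  - intro HX.
    set (XF := XH_formula A h l).
    set (Z := tvsub X XF).
    pose proof (IsJ_Jinv U l Z) as HJ.
    pose proof (HX _ _ HJ) as E1.
    pose proof (XF_ham A h U l Hh Hmetric HU Hl _ _ HJ) as E2.
    assert (E : gamma A l Z Z = 0).
    { unfold Z at 2. rewrite gamma_sub. fold XF in E2. lra. }
    apply tvsub_0. fold XF. fold Z.
    destruct (classic (Z = tv0)) as [H0 | H0]; auto.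
    pose proof (Hmetric l Hl Z H0). lra.
  - intro HX. subst X. apply XF_ham; assumption.
Qed.
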